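(* For every $d\ge1$, the simplex $S_d=\mathrm{conv}\{-\mathbf{1},e_1,\dots,e_d\}\subset\mathbb{R}^d$, where $\mathbf{1}=e_1+\dots+e_d$ is the all-ones vector and $e_i$ are the standard basis vectors, is simultaneously lattice reduced and lattice complete with respect to $\mathbb{Z}^d$.
   Context: For a lattice $\Gamma\subset\mathbb{R}^d$ with dual $\Gamma^\star=\{y:x\cdot y\in\mathbb{Z}\ \forall x\in\Gamma\}$ (for $\Gamma=\mathbb{Z}^d$, $\Gamma^\star=\mathbb{Z}^d$) and a convex body $K$: $\mathrm{wdt}_\Gamma(K)=\min_{y\in\Gamma^\star\setminus\{0\}}\max_{a,b\in K}y\cdot(a-b)$; a segment $[a,b]$ is a lattice segment if $b-a$ is parallel to a nonzero vector of $\Gamma$, with lattice length $|b-a|/|v|$ where $v$ generates $\Gamma\cap\mathrm{span}\{b-a\}$ and is a positive multiple of $b-a$; $\mathrm{diam}_\Gamma(K)$ is the maximum lattice length of a lattice segment in $K$. $K$ is lattice reduced if no convex body $K'\subsetneq K$ has the same lattice width, and lattice complete if no convex body $K'\supsetneq K$ has the same lattice diameter. *)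

(* Defs.v *)
From HB Require Import structures.
From mathcomp Require Import all_boot all_order all_algebra.
From mathcomp Require Import all_classical all_reals all_analysis.
Set Implicit Arguments. Unset Strict Implicit. Unset Printing Implicit Defensive.
Import Order.TTheory GRing.Theory Num.Theory.
Import numFieldNormedType.Exports.
Local Open Scope classical_set_scope.
Local Open Scope ring_scope.

Section LatticeDefs.
Variables (R : realType) (d : nat).
Notation V := 'rV[R]_d.

Definition dotv (x y : V) : R := \sum_(i < d) x 0 i * y 0 i.

(* points of the lattice Z^d (which is also its own dual lattice) *)
Definition intv (v : V) : Prop := forall i, v 0 i \is a Num.int.

Definition convex_set_ (K : set V) : Prop :=
  forall a b t, K a -> K b -> 0 <= t -> t <= 1 -> K ((1 - t) *: a + t *: b).
Definition convex_body (K : set V) : Prop :=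
  convex_set_ K /\ compact K /\ interior K !=set0.

Definition width_dir (K : set V) (y : V) : R :=
  sup [set dotv y (a - b) | a in K & b in K].

Definition lattice_width (K : set V) : R :=
  inf [set width_dir K y | y in [set y | intv y /\ y != 0]].

(* v is a nonzero lattice vector generating Z^d ∩ span{v} *)
Definition primitive (v : V) : Prop :=
  intv v /\ v != 0 /\ (forall (s : R), intv (s *: v) -> s \is a Num.int).

Definition lattice_seg_len (a b : V) (t : R) : Prop :=
  0 <= t /\ exists v, primitive v /\ b - a = t *: v.

(* diam_{Z^d}(K) = max lattice length of a lattice segment [a,b] ⊂ K
   (for convex K, [a,b] ⊂ K iff a, b ∈ K) *)
Definition lattice_diam (K : set V) : R :=
  sup [set t | exists a b, K a /\ K b /\ lattice_seg_len a b t].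

Definition lattice_reduced (K : set V) : Prop :=
  forall K' : set V, convex_body K' -> K' `<` K ->
    lattice_width K' <> lattice_width K.

Definition lattice_complete (K : set V) : Prop :=
  forall K' : set V, convex_body K' -> K `<` K' ->
    lattice_diam K' <> lattice_diam K.

Definition conv_pts (n : nat) (p : 'I_n -> V) : set V :=
  [set x | exists l : 'I_n -> R, (forall j, 0 <= l j) /\
     \sum_(j < n) l j = 1 /\ x = \sum_(j < n) l j *: p j].

(* vertices of S_d: vertex 0 is -1 = -(e_1+...+e_d), vertex i+1 is e_{i+1} *)
Definition simplex_vertex (j : 'I_d.+1) : V :=
  if unlift ord0 j is Some i then delta_mx 0 i else - const_mx 1.

Definition simplex_S : set V := conv_pts simplex_vertex.

End LatticeDefs.

(* Main.v *)
Require Import Defs.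
From HB Require Import structures.
From mathcomp Require Import all_boot all_order all_algebra.
From mathcomp Require Import all_classical all_reals all_analysis.
From mathcomp Require Import ring lra.
Set Implicit Arguments. Unset Strict Implicit. Unset Printing Implicit Defensive.
Import Order.TTheory GRing.Theory Num.Theory.
Import numFieldNormedType.Exports.
Local Open Scope classical_set_scope.
Local Open Scope ring_scope.

Section Helpers.
Variables (R : realType) (d : nat).
Notation V := 'rV[R]_d.
Notation pv := (@simplex_vertex R d).

Definition sig (x : V) : R := \sum_i x 0 i.
Definition c0 : R := (d.+1%:R)^-1.
Definition g0 (x : V) : R := (1 - sig x) * c0.
Definition gc (x : V) (j : 'I_d.+1) : R :=
  if unlift ord0 j is Some i then x 0 i + g0 x else g0 x.

Lemma c0_inv : d.+1%:R * c0 = 1.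
Proof. by rewrite /c0 mulfV // pnatr_eq0. Qed.

Lemma c0_gt0 : 0 < c0.
Proof. by rewrite /c0 invr_gt0 ltr0Sn. Qed.

Lemma gc0 x : gc x ord0 = g0 x.
Proof. by rewrite /gc unlift_none. Qed.

Lemma gcS x i : gc x (lift ord0 i) = x 0 i + g0 x.
Proof. by rewrite /gc liftK. Qed.

Lemma gc_sum x : \sum_j gc x j = 1.
Proof.
rewrite big_ord_recl gc0.
under eq_bigr do rewrite gcS.
rewrite big_split /= sumr_const card_ord -/(sig x).
have h : 1 - sig x = d.+1%:R * g0 x by rewrite /g0 mulrCA c0_inv mulr1.
rewrite -mulr_natr; move: h; rewrite -natr1 => h.
by rewrite -[RHS](subrK (sig x)) h; ring.
Qed.

Lemma pv_entry (j : 'I_d.+1) k :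
  pv j 0 k = if unlift ord0 j is Some i then (i == k)%:R else -1.
Proof.
rewrite /simplex_vertex; case: (unlift ord0 j) => [i|]; rewrite !mxE /=; [by rewrite eq_sym | by []].
Qed.

Lemma comb_entry (l : 'I_d.+1 -> R) k :
  (\sum_j l j *: pv j) 0 k = l (lift ord0 k) - l ord0.
Proof.
rewrite summxE big_ord_recl !mxE pv_entry unlift_none mulrN1 addrC.
congr (_ - _).
rewrite (bigD1 k) //= big1 => [|i ik]; rewrite !mxE pv_entry liftK.
  by rewrite eqxx mulr1 addr0.
by rewrite (negPf ik) mulr0.
Qed.

Lemma gc_decomp x : x = \sum_j gc x j *: pv j.
Proof. by apply/rowP => k; rewrite comb_entry gcS gc0 addrK. Qed.

Lemma gc_unique x (l : 'I_d.+1 -> R) : \sum_j l j = 1 ->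
  x = \sum_j l j *: pv j -> forall j, gc x j = l j.
Proof.
move=> h1 hl.
have hx k : x 0 k = l (lift ord0 k) - l ord0 by rewrite hl comb_entry.
have hs := h1; rewrite big_ord_recl in hs.
have hsig : sig x = \sum_k l (lift ord0 k) - l ord0 *+ d.
  by rewrite /sig; under eq_bigr do rewrite hx; rewrite sumrB sumr_const card_ord.
have hg : g0 x = l ord0.
  rewrite /g0 hsig -hs -[RHS]mulr1 -c0_inv -natr1 -mulr_natr; ring.
move=> j; case: (unliftP ord0 j) => [i ->|->]; first by rewrite gcS hg hx subrK.
by rewrite gc0.
Qed.

Lemma S_char x : simplex_S x <-> forall j, 0 <= gc x j.
Proof.
split.
  by case=> l [hl0 [hl1 hx]] j; rewrite (gc_unique hl1 hx).
move=> h; exists (gc x); split => //; split; [exact: gc_sum | exact: gc_decomp].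
Qed.

Lemma sig_comb a b t : sig ((1-t) *: a + t *: b) = (1-t) * sig a + t * sig b.
Proof. by rewrite /sig; under eq_bigr do rewrite !mxE; rewrite big_split -!mulr_sumr. Qed.

Lemma gc_comb a b t j : gc ((1-t) *: a + t *: b) j = (1-t) * gc a j + t * gc b j.
Proof. by rewrite /gc /g0 sig_comb; case: unlift => [i|]; rewrite ?mxE; ring. Qed.

Lemma sum_delta (T : finType) (F : T -> 'rV[R]_d) (j : T) :
  \sum_k (k == j)%:R *: F k = F j.
Proof.
rewrite (bigD1 j) //= eqxx scale1r big1 ?addr0 // => k kj.
by rewrite (negPf kj) scale0r.
Qed.

Lemma sum_deltaR (T : finType) (j : T) : \sum_k (k == j)%:R = 1 :> R.
Proof.
rewrite (bigD1 j) //= eqxx big1 ?addr0 // => k kj.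
by rewrite (negPf kj).
Qed.

Lemma gc_pv j k : gc (pv j) k = (k == j)%:R.
Proof. by apply: (gc_unique (l := fun k => (k == j)%:R)); [exact: sum_deltaR | rewrite sum_delta]. Qed.

Lemma pv_S j : simplex_S (pv j).
Proof. by apply/S_char => k; rewrite gc_pv ler0n. Qed.

Lemma gc_le1 x j : simplex_S x -> gc x j <= 1.
Proof.
move/S_char => h; have := gc_sum x; rewrite (bigD1 j) //=.
have : 0 <= \sum_(k | k != j) gc x k by apply: sumr_ge0 => k _; exact: h.
lra.
Qed.

Lemma gc_eq1 x j : simplex_S x -> gc x j = 1 -> x = pv j.
Proof.
move=> /[dup] Sx /S_char h hj.
have hz : \sum_(k | k != j) gc x k = 0.
  by move: (gc_sum x); rewrite (bigD1 j) //= hj; lra.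
have hz' := (psumr_eq0P (fun k _ => h k) hz).
rewrite [LHS]gc_decomp (bigD1 j) //= hj scale1r big1 ?addr0 // => k kj.
by rewrite hz' // scale0r.
Qed.

Lemma entry_gc (x : V) i : x 0 i = gc x (lift ord0 i) - gc x ord0.
Proof. by rewrite gcS gc0 addrK. Qed.

Lemma entry_bound (x : V) i : simplex_S x -> -1 <= x 0 i <= 1.
Proof.
move=> Sx; have /S_char h := Sx.
have := gc_le1 (lift ord0 i) Sx; have := gc_le1 ord0 Sx.
have := h (lift ord0 i); have := h ord0; rewrite entry_gc.
move=> *; apply/andP; split; lra.
Qed.

End Helpers.

Lemma hull_sub (R : realType) (d : nat) (K : set 'rV[R]_d) n (p : 'I_n -> 'rV[R]_d) :
  convex_set_ K -> (forall j, K (p j)) -> conv_pts p `<=` K.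
Proof.
move=> cK; elim: n p => [|n IH] p hp x [l [hl0 [hl1 ->]]].
  by move: hl1; rewrite big_ord0 => /eqP; rewrite eq_sym oner_eq0.
rewrite big_ord_recr /=; rewrite big_ord_recr /= in hl1.
set L := \sum_(i < n) l (widen_ord (leqnSn n) i) in hl1 *.
have hL0 : 0 <= L by apply: sumr_ge0 => i _; exact: hl0.
have [L0|Lpos] := eqVneq L 0.
  have hz := psumr_eq0P (fun i _ => hl0 (widen_ord (leqnSn n) i)) L0.
  rewrite big1 ?add0r; last by move=> i _; rewrite hz // scale0r.
  by rewrite L0 add0r in hl1; rewrite hl1 scale1r.
have Lgt : 0 < L by rewrite lt_def Lpos hL0.
have hx' : K (\sum_(i < n) (l (widen_ord (leqnSn n) i) / L) *: p (widen_ord (leqnSn n) i)).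
  apply: (IH (fun i => p (widen_ord (leqnSn n) i))) => //.
  exists (fun i => l (widen_ord (leqnSn n) i) / L); split.
    by move=> i; apply: divr_ge0 => //; exact: hl0.
  by split => //; rewrite -mulr_suml -/L mulfV.
have := cK _ _ (l ord_max) hx' (hp ord_max) (hl0 ord_max).
have -> : 1 - l ord_max = L by rewrite -hl1 addrK.
have -> : \sum_(i < n) l (widen_ord (leqnSn n) i) *: p (widen_ord (leqnSn n) i) =
   L *: \sum_(i < n) (l (widen_ord (leqnSn n) i) / L) *: p (widen_ord (leqnSn n) i).
  rewrite scaler_sumr; apply: eq_bigr => i _.
  by rewrite scalerA mulrC divfK.
by apply; lra.
Qed.

Section Diam.
Variables (R : realType) (d : nat).
Notation V := 'rV[R]_d.
Notation pv := (@simplex_vertex R d).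

Lemma sig_add (a w : V) : sig (a + w) = sig a + sig w.
Proof. by rewrite /sig -big_split; apply: eq_bigr => i _; rewrite mxE. Qed.

Lemma sig_scale t (w : V) : sig (t *: w) = t * sig w.
Proof. by rewrite /sig mulr_sumr; apply: eq_bigr => i _; rewrite mxE. Qed.

Lemma seg_bound (a b : V) t v : simplex_S a -> simplex_S b -> 0 <= t ->
  intv v -> v != 0 -> b - a = t *: v -> t * d%:R <= d.+1%:R.
Proof.
move=> Sa Sb t0 vint vn0 hv.
have hb : b = a + t *: v by rewrite -hv addrC subrK.
pose u (j : 'I_d.+1) := if unlift ord0 j is Some i then v 0 i else 0.
have u0 : u ord0 = 0 by rewrite /u unlift_none.
have uS i : u (lift ord0 i) = v 0 i by rewrite /u liftK.
have hlin j : gc b j - gc a j = t * (u j - sig v * c0 R d).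
  rewrite hb /gc /g0 sig_add sig_scale /u.
  case: unlift => [i|]; rewrite ?mxE; ring.
have hsu : sig v = \sum_j u j.
  by rewrite big_ord_recl u0 add0r; apply: eq_bigr => i _; rewrite uS.
have uint j : u j \is a Num.int.
  by rewrite /u; case: unlift => [i|]; [exact: vint | exact: int_num0].
have [m _ hm] := @Order.TotalTheory.arg_maxP _ R _ ord0 xpredT u isT.
pose J := [set j : 'I_d.+1 | u j == u m]%SET.
have uJ j : j \in J -> u j = u m by rewrite inE => /eqP.
have unJ j : j \notin J -> 1 <= u m - u j.
  move=> hne; have {hne} hne : u j != u m by apply: contra hne => h; rewrite inE.
  have hle : u j <= u m by exact: hm.
  have hi : u m - u j \is a Num.int by rewrite rpredB.
  have hn0 : u m - u j != 0 by rewrite subr_eq0 eq_sym.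
  by have := norm_intr_ge1 hi hn0; rewrite ger0_norm // subr_ge0.
have /S_char ga := Sa; have /S_char gb := Sb.
have hsumJ : \sum_(j in J) (gc b j - gc a j) <= 1.
  apply: (@le_trans _ _ (\sum_(j in J) gc b j)).
    by apply: ler_sum => j _; rewrite lerBlDr lerDl.
  rewrite -(gc_sum b) [X in _ <= X](bigID (mem J)) /= lerDl.
  by apply: sumr_ge0 => j _.
set X := u m - sig v * c0 R d.
have hL : \sum_(j in J) (gc b j - gc a j) = (t * X) *+ #|J|.
  rewrite -sumr_const; apply: eq_bigr => j hj; by rewrite hlin uJ.
have hkey : X * d.+1%:R = \sum_j (u m - u j).
  rewrite sumrB sumr_const card_ord -hsu /X mulrBl -mulrA (mulrC (c0 R d)) c0_inv.
  by rewrite mulr1 mulr_natr.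
have hge : (#|~: J|%:R : R) <= \sum_j (u m - u j).
  rewrite (bigID (mem J)) /=.
  have h1 : 0 <= \sum_(j | j \in J) (u m - u j).
    by apply: sumr_ge0 => j _; rewrite subr_ge0; exact: hm.
  have h2 : \sum_(j | j \in ~: J) (1 : R) <= \sum_(j | j \notin J) (u m - u j).
    rewrite (eq_bigl (fun j => j \notin J)); last by move=> j; rewrite inE.
    by apply: ler_sum => j; exact: unJ.
  by move: h2; rewrite sumr_const; lra.
have hcard : (#|J| + #|~: J|)%N = d.+1 by rewrite cardsC card_ord.
have k1 : (0 < #|J|)%N by apply/card_gt0P; exists m; rewrite inE.
have k1' : (0 < #|~: J|)%N.
  have [i vi] : exists i, v 0 i != 0.
    case/boolP: [exists i, v 0 i != 0] => [/existsP//|/existsPn h].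
    move/eqP: vn0; case; apply/rowP => k; rewrite mxE.
    by have := h k; rewrite negbK => /eqP.
  apply/card_gt0P.
  case/boolP: (u m == 0) => hm0.
    by exists (lift ord0 i); rewrite !inE uS (eqP hm0).
  by exists ord0; rewrite !inE u0 eq_sym.
move: hsumJ hge hkey; rewrite hL -mulr_natr => hs hge hkey.
have hK : (1 : R) <= #|J|%:R by rewrite ler1n.
have hK' : (1 : R) <= #|~: J|%:R by rewrite ler1n.
have hKK : (#|J|%:R + #|~: J|%:R : R) = d%:R + 1 by rewrite -natrD hcard natr1.
move: hkey hge; rewrite -natr1 => hkey hge.
set K := (#|J|%:R : R) in hs hK hKK *.
set K' := (#|~: J|%:R : R) in hge hK' hKK *.
have e1 : d%:R <= K * K' by nra.
have e2 : K * K' <= K * (X * (d%:R + 1)) by rewrite hkey; apply: ler_wpM2l; lra.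
have e3 : t * (K * (X * (d%:R + 1))) <= d%:R + 1.
  have -> : t * (K * (X * (d%:R + 1))) = (t * X * K) * (d%:R + 1) by ring.
  by rewrite -[X in _ <= X]mul1r; apply: ler_wpM2r => //; lra.
apply: (le_trans _ e3); apply: ler_wpM2l => //; exact: le_trans e1 e2.
Qed.

End Diam.

Section Width.
Variables (R : realType) (d : nat).
Notation V := 'rV[R]_d.
Notation pv := (@simplex_vertex R d).

Lemma dotv_sub (y a b : V) : dotv y (a - b) = dotv y a - dotv y b.
Proof. by rewrite /dotv -sumrB; apply: eq_bigr => i _; rewrite !mxE mulrBr. Qed.

Lemma dotv0 (y : V) : dotv y 0 = 0.
Proof. by rewrite /dotv big1 // => i _; rewrite mxE mulr0. Qed.

Lemma dotv_delta i (x : V) : dotv (delta_mx 0 i) x = x 0 i.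
Proof.
rewrite /dotv (bigD1 i) //= big1 ?addr0 => [|k ki]; rewrite mxE.
  by rewrite !eqxx mul1r.
by rewrite (negPf ki) andbF mul0r.
Qed.

Lemma dotvN (y x : V) : dotv (- y) x = - dotv y x.
Proof. by rewrite /dotv -sumrN; apply: eq_bigr => i _; rewrite mxE mulNr. Qed.

Lemma dotv_pv (y : V) j :
  dotv y (pv j) = if unlift ord0 j is Some i then y 0 i else - sig y.
Proof.
rewrite /dotv; case: (unliftP ord0 j) => [i ->|->].
  rewrite (bigD1 i) //= big1 ?addr0 => [|k ki]; rewrite pv_entry liftK.
    by rewrite eqxx mulr1.
  by rewrite eq_sym (negPf ki) mulr0.
rewrite /sig -sumrN; apply: eq_bigr => i _.
by rewrite pv_entry unlift_none mulrN1.
Qed.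

Lemma intv_delta i : intv (delta_mx 0 i : V).
Proof. by move=> k; rewrite mxE natr_int. Qed.

Lemma delta_neq0 i : (delta_mx 0 i : V) != 0.
Proof.
apply/negP => /eqP/rowP/(_ i); rewrite !mxE !eqxx /= => /eqP.
by rewrite oner_eq0.
Qed.

Lemma width_ge0 (K : set V) y : K !=set0 -> 0 <= width_dir K y.
Proof.
move=> [a Ka]; rewrite /width_dir.
set E := [set _ | _ in _ & _ in _].
have E0 : E 0 by exists a => //; exists a => //; rewrite subrr dotv0.
case: (pselect (has_ubound E)) => hub.
  by apply: sup_upper_bound => //; split => //; exists 0.
by rewrite sup_out // => -[].
Qed.

Lemma width_S_ge2 (y : V) : intv y -> y != 0 -> 2 <= width_dir (@simplex_S R d) y.
Proof.
move=> yint yn0.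
pose w j := dotv y (pv j).
have wsum : \sum_j w j = 0.
  rewrite big_ord_recl /w dotv_pv unlift_none.
  under eq_bigr do rewrite dotv_pv liftK.
  by rewrite -/(sig y) addNr.
have wint j : w j \is a Num.int.
  rewrite /w dotv_pv; case: unlift => [i|]; first exact: yint.
  by rewrite rpredN /sig rpred_sum.
have [i yi] : exists i, y 0 i != 0.
  case/boolP: [exists i, y 0 i != 0] => [/existsP//|/existsPn h].
  move/eqP: yn0; case; apply/rowP => k; rewrite mxE.
  by have := h k; rewrite negbK => /eqP.
have wi : w (lift ord0 i) != 0 by rewrite /w dotv_pv liftK.
have [j1 hj1] : exists j, 0 < w j.
  case/boolP: [exists j, 0 < w j] => [/existsP//|/existsPn h].
  have h' k : 0 <= - w k by rewrite oppr_ge0; have := h k; rewrite -leNgt.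
  have : \sum_k - w k = 0 by rewrite sumrN wsum oppr0.
  move/(psumr_eq0P (fun k _ => h' k))/(_ (lift ord0 i) isT)/eqP.
  by rewrite oppr_eq0 (negPf wi).
have [j2 hj2] : exists j, w j < 0.
  case/boolP: [exists j, w j < 0] => [/existsP//|/existsPn h].
  have h' k : 0 <= w k by have := h k; rewrite -leNgt.
  move: wsum.
  move/(psumr_eq0P (fun k _ => h' k))/(_ (lift ord0 i) isT)/eqP.
  by rewrite (negPf wi).
have e1 : 1 <= w j1.
  by have := norm_intr_ge1 (wint j1) (lt0r_neq0 hj1); rewrite gtr0_norm.
have e2 : 1 <= - w j2.
  have := norm_intr_ge1 (wint j2) (ltr0_neq0 hj2); rewrite ltr0_norm //.
rewrite /width_dir.
set E := [set _ | _ in _ & _ in _].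
have Ew : E (w j1 - w j2).
  by exists (pv j1); first exact: pv_S; exists (pv j2); first exact: pv_S; rewrite dotv_sub.
have hub : ubound E (\sum_i `|y 0 i| * 2).
  move=> z [a Sa [b Sb <-]]; rewrite /dotv; apply: ler_sum => k _.
  apply: (le_trans (ler_norm _)); rewrite normrM; apply: ler_wpM2l => //.
  have := entry_bound k Sa; have := entry_bound k Sb; rewrite !mxE.
  move=> /andP[? ?] /andP[? ?]; rewrite ler_norml; apply/andP; split; lra.
have := sup_upper_bound (conj (ex_intro _ _ Ew) (ex_intro _ _ hub)) Ew.
lra.
Qed.

Lemma lw_S_ge2 : (0 < d)%N -> 2 <= lattice_width (@simplex_S R d).
Proof.
move=> hd; apply: lb_le_inf.
  exists (width_dir (@simplex_S R d) (delta_mx 0 (Ordinal hd))).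
  by exists (delta_mx 0 (Ordinal hd)) => //; split; [exact: intv_delta | exact: delta_neq0].
by move=> z [y [yi yn] <-]; exact: width_S_ge2.
Qed.

End Width.

Section Main.
Variables (R : realType) (d : nat).
Notation V := 'rV[R]_d.
Notation pv := (@simplex_vertex R d).
Notation S := (@simplex_S R d).

Lemma width_lt2 (K : set V) y j j' : compact K -> K !=set0 -> K `<=` S ->
  ~ K (pv j) -> (forall x, dotv y x = gc x j - gc x j') ->
  continuous (dotv y) -> width_dir K y < 2.
Proof.
move=> cK [a Ka] KS Kj hf cf.
have [c cK' hc] := compact_EVT_max (ex_intro _ a Ka) cK (continuous_subspaceT cf).
have Kc := set_mem cK'.
have Sc := KS _ Kc.
have /S_char gcS := Sc.
have hc1 : gc c j < 1.
  rewrite lt_neqAle gc_le1 // andbT; apply/negP => /eqP h.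
  by apply: Kj; rewrite -(gc_eq1 Sc h).
have fc : dotv y c < 1 by rewrite hf; have := gcS j'; lra.
have ub : ubound [set dotv y (a - b) | a in K & b in K] (dotv y c + 1).
  move=> z [a' Ka' [b Kb <-]]; rewrite dotv_sub.
  have := hc _ (mem_set Ka'); have Sb := KS _ Kb.
  have := gc_le1 j' Sb; have /S_char := Sb => /(_ j) gb.
  rewrite (hf b); lra.
have := ge_sup (ex_intro _ _ (ex_intro2 _ _ a Ka (ex_intro2 _ _ a Ka erefl))) ub.
rewrite /width_dir; lra.
Qed.

Lemma gc_zero (k : 'I_d.+1) : gc (0 : V) k = c0 R d.
Proof.
have s0 : sig (0 : V) = 0 by rewrite /sig big1 // => i _; rewrite mxE.
rewrite /gc /g0 s0 subr0 mul1r; case: unlift => [i|] //.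
by rewrite mxE add0r.
Qed.

Lemma gc_scale_pv c j k : gc (c *: pv j) k = (1 - c) * c0 R d + c * (k == j)%:R.
Proof.
have -> : c *: pv j = (1 - c) *: 0 + c *: pv j by rewrite scaler0 add0r.
by rewrite gc_comb gc_zero gc_pv.
Qed.

Lemma primitive_pv (hd : (0 < d)%N) j : primitive (pv j).
Proof.
pose i0 := Ordinal hd.
have intp : intv (pv j).
  move=> k; rewrite pv_entry; case: unlift => [i|]; first exact: natr_int.
  by rewrite rpredN int_num1.
have [k hk] : exists k, pv j 0 k = 1 \/ pv j 0 k = -1.
  case: (unliftP ord0 j) => [i ->|->].
    by exists i; left; rewrite pv_entry liftK eqxx.
  by exists i0; right; rewrite pv_entry unlift_none.
split => //; split.
  apply/negP => /eqP h; move: hk; rewrite h mxE.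
  by case=> /eqP; rewrite eq_sym ?oppr_eq0 ?oner_eq0 // eqr_oppLR oppr0 oner_eq0.
move=> s /(_ k); rewrite mxE.
by case: hk => ->; rewrite ?mulr1 ?mulrN1 ?rpredN.
Qed.

Lemma seg_pv c j (hd : (0 < d)%N) : c <= 1 ->
  lattice_seg_len (c *: pv j) (pv j) (1 - c).
Proof.
move=> c1; split; first by rewrite subr_ge0.
exists (pv j); split; first exact: primitive_pv.
by rewrite scalerBl scale1r.
Qed.

Definition Dv : R := d.+1%:R / d%:R.

Lemma diam_S (hd : (0 < d)%N) : lattice_diam S = Dv.
Proof.
have Dpos : (0 : R) < d%:R by rewrite ltr0n.
pose j := (ord0 : 'I_d.+1).
rewrite /lattice_diam; set E := [set t | _].
have ub : ubound E Dv.
  move=> t [a [b [Sa [Sb [t0 [v [[vi [vn _]] hv]]]]]]].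
  have := seg_bound Sa Sb t0 vi vn hv.
  by rewrite /Dv ler_pdivlMr.
have ED : E Dv.
  exists ((- (d%:R)^-1) *: pv j), (pv j); split.
    apply/S_char => k; rewrite gc_scale_pv /c0.
    case: (k == j); rewrite ?mulr1 ?mulr0 ?addr0; last first.
      have hi : (0 : R) < (d%:R)^-1 by rewrite invr_gt0.
      by apply: mulr_ge0; [lra | rewrite invr_ge0 ler0n].
    have -> : (1 - - (d%:R)^-1) * (d.+1%:R)^-1 + - (d%:R)^-1 = 0 :> R.
      have hd1 : (d%:R + 1 : R) != 0 by rewrite natr1 pnatr_eq0.
      have hd0 : (d%:R : R) != 0 by rewrite lt0r_neq0.
      rewrite -natr1; field; by rewrite ?hd1 ?hd0.
    by [].
  split; first exact: pv_S.
  have -> : Dv = 1 - - (d%:R)^-1.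
    rewrite /Dv -natr1 opprK; field; by rewrite lt0r_neq0.
  by apply: seg_pv => //; rewrite -(opprK 1) lerN2; have hi : (0 : R) < (d%:R)^-1 by rewrite invr_gt0.
apply/le_anti/andP; split.
  by apply: ge_sup => //; exists Dv.
by apply: sup_upper_bound => //; split; [exists Dv | exists Dv].
Qed.

End Main.

Lemma lw_le (R : realType) (d : nat) (K : set 'rV[R]_d) y : K !=set0 -> intv y -> y != 0 ->
  lattice_width K <= width_dir K y.
Proof.
move=> K0 yi yn; rewrite /lattice_width; apply: ge_inf.
  by exists 0 => z [y' _ <-]; exact: width_ge0.
by exists y.
Qed.

Theorem proposition3p12 (R : realType) (d : nat) :
  (0 < d)%N ->
  lattice_reduced (@simplex_S R d) /\ lattice_complete (@simplex_S R d).
Proof.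
move=> hd; pose i0 := Ordinal hd.
have Dpos : (0 : R) < d%:R by rewrite ltr0n.
split.
  move=> K' [cvx [cpt int0]] [K'S nSK'] heq.
  have K'ne : K' !=set0 by case: int0 => x /interior_subset hx; exists x.
  have [j Kj] : exists j, ~ K' (simplex_vertex R j).
    apply: contrapT => h; apply: nSK'; apply: (hull_sub cvx) => j.
    by apply: contrapT => hj; apply: h; exists j.
  have lS := lw_S_ge2 R hd.
  have [y [yi [yn hw]]] : exists y : 'rV[R]_d, intv y /\ y != 0 /\ width_dir K' y < 2.
    case: (unliftP ord0 j) => [i ej|ej]; rewrite ej in Kj.
      exists (delta_mx 0 i); split; first exact: intv_delta.
      split; first exact: delta_neq0.
      apply: (width_lt2 (j' := ord0) cpt K'ne K'S Kj).
        by move=> x; rewrite dotv_delta entry_gc.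
      have -> : dotv (delta_mx 0 i) = fun x : 'rV[R]_d => x 0 i.
        by apply: funext => x; rewrite dotv_delta.
      exact: coord_continuous.
    exists (- delta_mx 0 i0); split; first by move=> k; rewrite mxE rpredN; exact: intv_delta.
    split; first by rewrite oppr_eq0 delta_neq0.
    apply: (width_lt2 (j' := lift ord0 i0) cpt K'ne K'S Kj).
      by move=> x; rewrite dotvN dotv_delta entry_gc opprB.
    have -> : dotv (- delta_mx 0 i0) = fun x : 'rV[R]_d => - x 0 i0.
      by apply: funext => x; rewrite dotvN dotv_delta.
    by move=> x; apply: continuousN; exact: coord_continuous.
  have := lw_le K'ne yi yn; rewrite heq; lra.
move=> K' [cvx [cpt int0]] [SK' nK'S] heq.
rewrite diam_S // in heq.
have [p Kp nSp] : exists2 p, K' p & ~ @simplex_S R d p.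
  apply: contrapT => h; apply: nK'S => x Kx; apply: contrapT => nx.
  by apply: h; exists x.
have [j gj] : exists j, gc p j < 0.
  apply: contrapT => h; apply: nSp; apply/S_char => k; rewrite leNgt.
  by apply/negP => hk; apply: h; exists k.
set D : R := d%:R.
set N : R := d.+1%:R.
have hN : 0 < N by rewrite /N ltr0n.
have hND : N = D + 1 by rewrite /N /D natr1.
have hc0 : N * c0 R d = 1 by exact: c0_inv.
have hc0p : 0 < c0 R d by exact: c0_gt0.
pose a := - gc p j.
have ha : 0 < a by rewrite /a oppr_gt0.
pose B := \sum_k `|gc p k|.
have hB k : `|gc p k| <= B.
  by rewrite /B (bigD1 k) //= lerDl; apply: sumr_ge0.
have haB : a <= B by have := hB j; rewrite ltr0_norm.
pose l := (1 + N * B)^-1.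
have hNB : 0 < 1 + N * B.
  have : 0 <= N * B by apply: mulr_ge0; lra.
  lra.
have hl : l * (1 + N * B) = 1 by rewrite /l mulVf // lt0r_neq0.
have hl0 : 0 < l by rewrite /l invr_gt0.
have hlB : l * B * N < 1.
  have -> : l * B * N = 1 - l by rewrite -hl; ring.
  lra.
have hl1 : l < 1 by nra.
have hlBc : l * B < c0 R d.
  have -> : l * B = (l * B * N) * c0 R d by rewrite -mulrA hc0 mulr1.
  by rewrite -[X in _ < X]mul1r ltr_pM2r.
have hc01 : c0 R d <= 1 by nra.
pose e := l * a / D.
have heD : e * D = l * a by rewrite /e divfK // lt0r_neq0.
have he : 0 < e by rewrite /e divr_gt0 // mulr_gt0.
pose c := - (D^-1 + e).
have hDi : 0 < D^-1 by rewrite invr_gt0.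
have hcq : (1 - c) * c0 R d + c = - (l * a) * c0 R d.
  rewrite -heD /c /c0 -/N hND; field.
  by rewrite -hND lt0r_neq0 // lt0r_neq0.
pose q := c *: simplex_vertex R j.
pose s := (1 - l)^-1 *: (q - l *: p).
have hq : q = (1 - l) *: s + l *: p.
  by rewrite /s scalerA mulfV ?scale1r ?subrK // subr_eq0 eq_sym lt_eqF.
have Ss : @simplex_S R d s.
  apply/S_char => k.
  have hg := gc_comb s p l k; rewrite -hq gc_scale_pv in hg.
  suff : 0 <= (1 - l) * gc s k by rewrite pmulr_rge0 // subr_gt0.
  have -> : (1 - l) * gc s k = (1 - c) * c0 R d + c * (k == j)%:R - l * gc p k.
    by rewrite hg addrK.
  case: eqP => [->|kj]; rewrite ?mulr1 ?mulr0 ?addr0.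
    rewrite hcq.
    have -> : - (l * a) * c0 R d - l * gc p j = (l * a) * (1 - c0 R d) by rewrite /a; ring.
    by apply: mulr_ge0; [apply: mulr_ge0; lra | lra].
  have := hB k; rewrite ler_norml => /andP[_ hk].
  have : l * gc p k <= l * B by rewrite ler_pM2l.
  have : c0 R d <= (1 - c) * c0 R d by rewrite ler_pMl // /c; lra.
  lra.
have Kq : K' q by rewrite hq; apply: cvx; [exact: SK' | exact: Kp | lra | lra].
have Kpj : K' (simplex_vertex R j) by apply: SK'; exact: pv_S.
have hseg : lattice_seg_len q (simplex_vertex R j) (1 - c).
  by apply: seg_pv => //; rewrite /c; lra.
have hDv : Dv R d = 1 + D^-1 by rewrite /Dv -/N hND -/D; field; rewrite lt0r_neq0.
move: heq; rewrite /lattice_diam; set E := [set t | _] => heq.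
have Ec : E (1 - c) by exists q, (simplex_vertex R j).
case: (pselect (has_ubound E)) => hub.
  have := sup_upper_bound (conj (ex_intro _ _ Ec) hub) Ec.
  by rewrite heq hDv /c; lra.
move: heq; rewrite sup_out; last by case.
rewrite hDv; lra.
Qed.
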